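(* Let $G$ be a connected simple graph with $m$ edges and let $k\geq 2$ be an integer. Then $$\chi_{dom}(P_{k+1})\leq \chi_{dom}(G^{\frac{1}{k}})\leq (m-1)\chi_{dom}(P_k)+\chi_{dom}(P_{k+1}).$$
   Context: All graphs are finite and simple. A dominated coloring of a graph $H$ is a proper vertex coloring of $H$ such that for every color class $C$ there is a vertex $x\in V(H)$ adjacent to every vertex of $C$. The dominated chromatic number $\chi_{dom}(H)$ is the minimum number of colors in a dominated coloring of $H$. $P_n$ denotes the path on $n$ vertices. The $k$-subdivision $G^{\frac{1}{k}}$ of $G$ is the graph obtained by replacing each edge $v_iv_j$ of $G$ by a path of length $k$ (i.e. with $k-1$ new internal vertices) between $v_i$ and $v_j$, the internal vertices of distinct such paths being distinct; if $G$ has $n$ vertices and $m$ edges then $G^{\frac{1}{k}}$ has $n+(k-1)m$ vertices and $km$ edges. *)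

(* Defs.v *)
From mathcomp Require Import all_boot.
Set Implicit Arguments. Unset Strict Implicit. Unset Printing Implicit Defensive.

(* A simple graph is a finite type V with a symmetric irreflexive relation e. *)

Definition proper_col (V : finType) (e : rel V) (n : nat) (f : {ffun V -> 'I_n}) : bool :=
  [forall x, forall y, e x y ==> (f x != f y)].

Definition dominated_col (V : finType) (e : rel V) (n : nat) (f : {ffun V -> 'I_n}) : bool :=
  proper_col e f && [forall c : 'I_n, exists x, forall y, (f y == c) ==> e x y].

Definition has_dom_col (V : finType) (e : rel V) (n : nat) : bool :=
  [exists f : {ffun V -> 'I_n}, dominated_col e f].

(* Dominated chromatic number: least n admitting a dominated colouring.
   (If a dominated colouring exists, one exists with at most #|V| colours,
   so searching n in 0..#|V| finds the true minimum; the junk value #|V|.+1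
   only arises for graphs with no dominated colouring.) *)
Definition chi_dom (V : finType) (e : rel V) : nat :=
  find (has_dom_col e) (iota 0 #|V|.+1).

Definition path_rel (n : nat) : rel 'I_n :=
  fun i j => (i.+1 == j :> nat) || (j.+1 == i :> nat).

(* Edges of G, each recorded once as an ordered pair (u, w) with u before w. *)
Definition oedge (V : finType) (e : rel V) (p : V * V) : bool :=
  e p.1 p.2 && (enum_rank p.1 < enum_rank p.2).

Definition nedges (V : finType) (e : rel V) : nat := #|[pred p : V * V | oedge e p]|.

Definition edge_t (V : finType) (e : rel V) := {p : V * V | oedge e p}.

(* Vertices of the k-subdivision: original vertices, plus for each edge
   (u,w) the k-1 internal vertices x_1..x_{k-1} (index j : 'I_(k-1) stands for
   x_{j+1}) of the path u = x_0, x_1, ..., x_k = w. *)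
Definition subdiv_t (V : finType) (e : rel V) (k : nat) : finType :=
  (V + (edge_t e * 'I_k.-1))%type.

Definition subdiv_adj0 (V : finType) (e : rel V) (k : nat)
  (a b : subdiv_t e k) : bool :=
  match a, b with
  | inl u, inl w => (k == 1) && e u w
  | inl u, inr (eps, j) =>
      ((val j == 0) && (u == (val eps).1)) || ((val j).+1 == k.-1) && (u == (val eps).2)
  | inr _, inl _ => false
  | inr (eps, j), inr (eps', j') =>
      (eps == eps') && (((val j).+1 == val j') || ((val j').+1 == val j))
  end.

Definition subdiv_rel (V : finType) (e : rel V) (k : nat) : rel (subdiv_t e k) :=
  fun a b => subdiv_adj0 a b || subdiv_adj0 b a.

Arguments path_rel n : clear implicits.
Arguments subdiv_rel {V} e k.
Arguments subdiv_t {V} e k.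
Arguments chi_dom {V} e.
Arguments nedges {V} e.

(* Main.v *)
Require Import Defs.
From mathcomp Require Import all_boot zify.
Set Implicit Arguments. Unset Strict Implicit. Unset Printing Implicit Defensive.

Lemma chi_le (T : finType) (r : rel T) c : has_dom_col r c -> chi_dom r <= c.
Proof.
move=> h; rewrite /chi_dom.
case: (leqP c #|T|) => hc.
  rewrite leqNgt; apply/negP => /(before_find 0).
  by rewrite nth_iota ?add0n ?h // ltnS.
apply: leq_trans (find_size _ _) _; by rewrite size_iota.
Qed.

Lemma chi_ub (T : finType) (r : rel T) : chi_dom r <= #|T|.+1.
Proof. by apply: leq_trans (find_size _ _) _; rewrite size_iota. Qed.

Lemma chi_spec (T : finType) (r : rel T) c : c <= #|T| -> has_dom_col r c ->
  has_dom_col r (chi_dom r).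
Proof.
move=> hc h.
have hh : has (has_dom_col r) (iota 0 #|T|.+1).
  by apply/hasP; exists c => //; rewrite mem_iota ltnS hc.
have := nth_find 0 hh; rewrite nth_iota ?add0n //.
by have := hh; rewrite has_find size_iota.
Qed.

Lemma chi_cases (T : finType) (r : rel T) :
  has_dom_col r (chi_dom r) \/ chi_dom r = #|T|.+1.
Proof.
rewrite /chi_dom.
case hh: (has (has_dom_col r) (iota 0 #|T|.+1)).
  left; have := nth_find 0 hh; rewrite nth_iota ?add0n //.
  by have := hh; rewrite has_find size_iota.
by right; move/negbT: hh; rewrite has_find -leqNgt size_iota => h;
   apply/eqP; rewrite eqn_leq h andbT;
   have := find_size (has_dom_col r) (iota 0 #|T|.+1); rewrite size_iota.
Qed.

Lemma build (T : finType) (r : rel T) P (col : T -> nat) :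
  (forall x, col x < P) -> (forall x y, r x y -> col x != col y) ->
  (forall c, c < P -> exists X, forall y, col y = c -> r X y) ->
  has_dom_col r P.
Proof.
move=> hP hpr hdom.
apply/existsP; exists [ffun x => Ordinal (hP x)].
apply/andP; split.
  apply/forallP => x; apply/forallP => y; apply/implyP => hxy.
  rewrite !ffunE; apply/negP => /eqP [] /eqP; exact/negP/hpr.
apply/forallP => c; have [X hX] := hdom c (ltn_ord c).
apply/existsP; exists X; apply/forallP => y; apply/implyP.
by rewrite ffunE => /eqP /(congr1 val) /= /hX.
Qed.

Lemma path_has N : has_dom_col (path_rel N.+2) N.+2.
Proof.
apply: (@build _ _ _ (fun i => val i)); first exact: ltn_ord.
  move=> x y; rewrite /path_rel /= => /orP [] /eqP h; apply/eqP => h'; lia.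
move=> c hc.
exists (inord (if c.+1 < N.+2 then c.+1 else c - 1)) => y hy.
have hy' : nat_of_ord y = c by [].
rewrite /path_rel inordK; last by case: ifP => h; lia.
rewrite hy'; case: ifP => h; first by rewrite eqxx orbT.
apply/orP; left; apply/eqP; lia.
Qed.

Lemma path_spec N : has_dom_col (path_rel N.+2) (chi_dom (path_rel N.+2)).
Proof. by apply: (chi_spec (c := N.+2)); rewrite ?card_ord // path_has. Qed.

Lemma adjA N px py (s : bool) : s <= px <= N.+1 + s -> s <= py <= N.+1 + s ->
  (px.+1 == py) || (py.+1 == px) -> path_rel N.+2 (inord (px - s)) (inord (py - s)).
Proof. move=> h1 h2 h; rewrite /path_rel !inordK; lia. Qed.

Lemma adjB N (z : 'I_N.+2) py (s : bool) : s <= py <= N.+1 + s ->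
  path_rel N.+2 z (inord (py - s)) -> ((z + s).+1 == py) || (py.+1 == z + s).
Proof. move=> h1; rewrite /path_rel inordK; lia. Qed.

Lemma zsh N (z : 'I_N) (s : bool) : z + s <= N.
Proof. have := ltn_ord z; case: s; lia. Qed.


Section Main.
Variables (V : finType) (e : rel V).
Hypotheses (e_sym : symmetric e) (e_irr : irreflexive e).
Variable n : nat.
Local Notation k := n.+2.
Local Notation T := (subdiv_t e n.+2).
Local Notation r := (subdiv_rel e n.+2).
Local Notation E := (edge_t e).

Lemma rLL a b : r (inl a) (inl b) = false.
Proof. by rewrite /subdiv_rel /=. Qed.

Lemma rLR a (eps : E) (j : 'I_n.+1) : r (inl a) (inr (eps, j)) =
  ((j == 0 :> nat) && (a == (val eps).1)) || ((j.+1 == n.+1) && (a == (val eps).2)).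
Proof. by rewrite /subdiv_rel /= orbF. Qed.

Lemma rRL a (eps : E) (j : 'I_n.+1) : r (inr (eps, j)) (inl a) =
  ((j == 0 :> nat) && (a == (val eps).1)) || ((j.+1 == n.+1) && (a == (val eps).2)).
Proof. by rewrite /subdiv_rel /=. Qed.

Lemma rRR (eps eps' : E) (j j' : 'I_n.+1) : r (inr (eps, j)) (inr (eps', j')) =
  (eps == eps') && ((j.+1 == j' :> nat) || (j'.+1 == j :> nat)).
Proof.
rewrite /subdiv_rel /= (eq_sym eps').
by case: (eps == eps') => //=; rewrite [X in _ || X]orbC orbb.
Qed.

Lemma r_sym : symmetric r.
Proof. by move=> x y; rewrite /subdiv_rel orbC. Qed.

Lemma edge_e (eps : E) : e (val eps).1 (val eps).2.
Proof. by case/andP: (valP eps). Qed.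

Lemma edge_lt (eps : E) : enum_rank (val eps).1 < enum_rank (val eps).2.
Proof. by case/andP: (valP eps). Qed.

Lemma edge_neq (eps : E) : ((val eps).1 == (val eps).2) = false.
Proof. by apply/negbTE/eqP => h; have := edge_e eps; rewrite h e_irr. Qed.

Lemma edge_neq' (eps : E) : ((val eps).2 == (val eps).1) = false.
Proof. by rewrite eq_sym edge_neq. Qed.

Lemma edge_eq (eps eps' : E) : (val eps).1 = (val eps').1 ->
  (val eps).2 = (val eps').2 -> eps = eps'.
Proof.
move=> h1 h2; apply: val_inj.
by move: h1 h2; case: (val eps) => ? ?; case: (val eps') => ? ? /= -> ->.
Qed.

Lemma edge_noflip (eps eps' : E) : (val eps).1 = (val eps').2 ->
  (val eps).2 = (val eps').1 -> False.
Proof.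
move=> h1 h2; have := edge_lt eps; have := edge_lt eps'.
rewrite h1 h2; lia.
Qed.

Definition fullp (eps : E) (p : nat) : T :=
  if p == 0 then inl (val eps).1
  else if p < k then inr (eps, (inord p.-1 : 'I_n.+1)) else inl (val eps).2.

Lemma fullp0 eps : fullp eps 0 = inl (val eps).1.
Proof. by []. Qed.

Lemma fullpk eps : fullp eps k = inl (val eps).2.
Proof. by rewrite /fullp /= ltnn. Qed.

Lemma fullpM eps p : 0 < p -> p < k -> fullp eps p = inr (eps, inord p.-1).
Proof. by rewrite /fullp => /prednK <- /= ->. Qed.

Lemma inordP p : p < k -> ((inord p.-1 : 'I_n.+1) = p.-1 :> nat).
Proof. by move=> h; rewrite inordK //; lia. Qed.

Lemma fullp_adj eps p : p < k -> r (fullp eps p) (fullp eps p.+1).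
Proof.
move=> hp; case: p hp => [|p] hp.
  by rewrite fullp0 fullpM // rLR; rewrite inordP //= eqxx.
have [hk|hk] : p.+2 < k \/ p.+2 = k by lia.
  rewrite !fullpM // rRR eqxx /= !inordK; lia.
rewrite hk fullpk fullpM // rRL /= eqxx inordK; lia.
Qed.

Lemma fullp_adj2 eps p q : p <= k -> q <= k -> (p.+1 == q) || (q.+1 == p) ->
  r (fullp eps p) (fullp eps q).
Proof.
move=> hp hq /orP [/eqP hq'|/eqP hp'].
  by rewrite -hq'; apply: fullp_adj; rewrite -hq' in hq.
by rewrite r_sym -hp'; apply: fullp_adj; rewrite -hp' in hp.
Qed.

Lemma fullp_rel eps p q : p <= k -> q <= k -> r (fullp eps p) (fullp eps q) ->
  (p.+1 == q) || (q.+1 == p).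
Proof.
move=> hp hq.
have [->|p0] := eqVneq p 0; [|have [pk|->] : (p < k) \/ (p = k) by lia];
  (have [->|q0] := eqVneq q 0; [|have [qk|->] : (q < k) \/ (q = k) by lia]);
  rewrite ?fullp0 ?fullpk ?fullpM ?lt0n // ?rLL ?rLR ?rRL ?rRR //;
  rewrite ?eqxx ?edge_neq ?edge_neq' /= ?inordK; lia.
Qed.

Variable e0 : E.
Local Notation u0 := (val e0).1.
Local Notation w0 := (val e0).2.

Lemma two_ends (eps : E) (j : 'I_n.+1) : eps != e0 ->
  r (inr (eps, j)) (inl u0) -> r (inr (eps, j)) (inl w0) -> False.
Proof.
move=> hne; rewrite !rRL => h1 h2.
have hu := edge_neq e0.
case/orP: h1 => /andP [hj1 /eqP hu1]; case/orP: h2 => /andP [hj2 /eqP hw2].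
- by move: hu; rewrite hu1 hw2 eqxx.
- by move/eqP: hne; apply; apply: edge_eq.
- exact: (edge_noflip (esym hw2) (esym hu1)).
- by move: hu; rewrite hu1 hw2 eqxx.
Qed.

Lemma f3 (x : T) : exists2 z, z <= k &
  forall q, q <= k -> r x (fullp e0 q) -> (z.+1 == q) || (q.+1 == z).
Proof.
have hu := edge_neq e0; have hu' := edge_neq' e0.
case: x => [v|[eps j]].
  exists (if v == w0 then k else 0); first by case: ifP.
  move=> q hq.
  have [->|p0] := eqVneq q 0; [|have [pk|->] : (q < k) \/ (q = k) by lia];
    rewrite ?fullp0 ?fullpk ?fullpM ?lt0n // ?rLL ?rLR ?inordP //.
  case: (eqVneq v w0) => [->|hv]; rewrite ?hu' ?eqxx //=; lia.
have [he|hne] := eqVneq eps e0.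
  subst eps; exists j.+1; first by have := ltn_ord j; lia.
  move=> q hq.
  have [->|p0] := eqVneq q 0; [|have [pk|->] : (q < k) \/ (q = k) by lia];
    rewrite ?fullp0 ?fullpk ?fullpM ?lt0n // ?rRL ?rRR ?inordP // ?eqxx ?hu ?hu' /=; lia.
exists (if r (inr (eps, j)) (inl u0) then 1 else n.+1); first by case: ifP.
move=> q hq.
have [->|p0] := eqVneq q 0; [|have [pk|->] : (q < k) \/ (q = k) by lia].
- by rewrite fullp0 => ->.
- by rewrite fullpM ?lt0n // rRR (negbTE hne).
- rewrite fullpk => hw; case: ifP => hu0; last by lia.
  by case: (two_ends hne hu0 hw).
Qed.

Lemma lower c : has_dom_col r c -> has_dom_col (path_rel k.+1) c.
Proof.
move/existsP => [f /andP [hpr hdom]].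
apply/existsP; exists [ffun q : 'I_k.+1 => f (fullp e0 q)]; apply/andP; split.
  apply/forallP => x; apply/forallP => y; apply/implyP => hxy; rewrite !ffunE.
  move/forallP: hpr => /(_ (fullp e0 x)) /forallP /(_ (fullp e0 y)) /implyP; apply.
  by apply: fullp_adj2 => //; rewrite -ltnS ltn_ord.
apply/forallP => cc; move/forallP: hdom => /(_ cc) /existsP [X /forallP hX].
have [z hz hz'] := f3 X.
apply/existsP; exists (inord z); apply/forallP => y; apply/implyP; rewrite ffunE => hy.
have := implyP (hX (fullp e0 y)) hy => hr.
rewrite /path_rel inordK //; apply: hz' hr; by rewrite -ltnS ltn_ord.
Qed.

Hypothesis e_conn : forall x y : V, connect e x y.

Definition distP (v : V) (d : nat) : bool :=
  [exists p : d.-tuple V, path e u0 p && (last u0 p == v)].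

Lemma distE v : exists d, distP v d.
Proof.
have /connectP [p hp hl] := e_conn u0 v.
exists (size p); apply/existsP; exists (in_tuple p); by rewrite /= hp -hl eqxx.
Qed.

Definition dist v := ex_minn (distE v).

Lemma dist_min v d : distP v d -> dist v <= d.
Proof. by rewrite /dist; case: ex_minnP => m _ hm; apply: hm. Qed.

Lemma dist_spec v : distP v (dist v).
Proof. by rewrite /dist; case: ex_minnP. Qed.

Lemma dist_u0 : dist u0 = 0.
Proof.
apply/eqP; rewrite -leqn0; apply: dist_min; apply/existsP; exists [tuple].
by rewrite /= eqxx.
Qed.

Lemma dist_dec v : v != u0 -> exists y, e v y && (dist y < dist v).
Proof.
move=> hv; have /existsP [p /andP [hp /eqP hl]] := dist_spec v.
move: (size_tuple p) hp hl; case/lastP: (tval p) => [|q x].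
  by move=> _ _ /= hl; rewrite hl eqxx in hv.
rewrite size_rcons last_rcons rcons_path => hs /andP [hq hx] hxv; subst v.
exists (last u0 q); rewrite e_sym hx /= -hs ltnS.
apply: dist_min; apply/existsP; exists (in_tuple q); by rewrite /= hq eqxx.
Qed.

Definition par v := if v == w0 then u0
  else odflt u0 [pick y | e v y && (dist y < dist v)].

Lemma par_spec v : v != u0 -> e v (par v) && (dist (par v) < dist v).
Proof.
move=> hv; rewrite /par; case: eqP => [->|_].
  rewrite e_sym edge_e dist_u0 /= lt0n; apply/negP => /eqP h0.
  have /existsP [p /andP [_ /eqP hl]] := dist_spec w0.
  have hs : size (tval p) = 0 by rewrite size_tuple h0.
  move: hs hl; case: (tval p) => [|? ?] //= _ h.
  by move: (edge_neq e0); rewrite h eqxx.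
case: pickP => [y -> //| h].
by have [y hy] := dist_dec hv; rewrite h in hy.
Qed.

Definition orp v := if enum_rank v < enum_rank (par v) then (v, par v) else (par v, v).

Definition pe v : E := insubd e0 (orp v).

Lemma pe_val v : v != u0 -> val (pe v) = orp v.
Proof.
move=> hv; rewrite /pe insubdK //.
have /andP [he _] := par_spec hv.
rewrite /oedge /orp unfold_in; case: ifP => h /=; first by rewrite he h.
rewrite e_sym he /=.
have hne : (enum_rank v : nat) != enum_rank (par v).
  apply/negP => /eqP /val_inj /enum_rank_inj hvp.
  by move: he; rewrite -hvp e_irr.
by rewrite ltn_neqAle eq_sym hne /= leqNgt h.
Qed.

Lemma pe_mem v : v != u0 -> ((val (pe v)).1 == v) || ((val (pe v)).2 == v).
Proof. by move=> hv; rewrite pe_val // /orp; case: ifP => _ /=; rewrite eqxx ?orbT. Qed.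

Lemma pe_inj v v' : v != u0 -> v' != u0 -> pe v = pe v' -> v = v'.
Proof.
move=> hv hv' h; have := congr1 val h; rewrite !pe_val // /orp.
have /andP [_ d1] := par_spec hv; have /andP [_ d2] := par_spec hv'.
case: ifP => _; case: ifP => _ [e1 e2] //.
  by move: d1 d2; rewrite -e1 e2; lia.
by move: d1 d2; rewrite e1 -e2; lia.
Qed.

Lemma pe_ne v : v != u0 -> v != w0 -> pe v != e0.
Proof.
move=> h1 h2; apply/negP => /eqP h; have := pe_mem h1; rewrite h.
by rewrite !(eq_sym _ v) (negbTE h1) (negbTE h2).
Qed.

Definition blk (x : T) : E :=
  match x with
  | inl v => if (v == u0) || (v == w0) then e0 else pe v
  | inr (eps, _) => eps
  end.

Definition posF (x : T) : nat :=
  match x with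
  | inl v => if v == u0 then 0 else if v == w0 then k
             else if (val (pe v)).1 == v then 0 else k
  | inr (_, j) => j.+1
  end.

Lemma ltj (j : 'I_(n.+2).-1) : @nat_of_ord n.+1 j < n.+1.
Proof. exact: ltn_ord j. Qed.

Lemma posF_le x : posF x <= k.
Proof.
case: x => [v|[eps j]] /=; first by repeat case: ifP.
have := ltj j; lia. Qed.

Lemma fullp_pos x : fullp (blk x) (posF x) = x.
Proof.
case: x => [v|[eps j]] /=.
  case: (eqVneq v u0) => [->|h1]; first by [].
  case: (eqVneq v w0) => [hw|h2].
    by subst v; rewrite ?(negbTE h1) /= ?eqxx ?orbT; exact: fullpk.
  rewrite /=.
  case: ifP => h3; first by rewrite fullp0 (eqP h3).
  by have := pe_mem h1; rewrite h3 /= fullpk => /eqP ->.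
rewrite fullpM //; last by have := ltj j; lia.
by rewrite /= inord_val.
Qed.

Definition sh (eps : E) : bool :=
  [&& (val eps).2 != u0, (val eps).2 != w0 & pe (val eps).2 == eps].

Lemma pos_range x : blk x != e0 -> sh (blk x) <= posF x <= n.+1 + sh (blk x).
Proof.
case: x => [v|[eps j]] /=; last by have := ltj j; case: (sh eps); lia.
case: (eqVneq v u0) => [->|h1]; first by rewrite /= ?eqxx.
case: (eqVneq v w0) => [hw|h2]; first by subst v; rewrite /= ?eqxx ?orbT.
move=> _.
case: ifP => h3.
  have -> : sh (pe v) = false.
    apply/negP => /and3P [a b /eqP c].
    have := pe_inj a h1 c => h4.
    by move: (edge_neq (pe v)); rewrite h4 (eqP h3) eqxx.
  by [].
have h4 : (val (pe v)).2 == v by have := pe_mem h1; rewrite h3.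
have -> : sh (pe v) = true by rewrite /sh (eqP h4) h1 h2 eqxx.
rewrite /=; lia.
Qed.

Local Notation m := #|{: E}|.
Hypothesis he0 : (enum_rank e0 : nat) = m.-1.

Definition rk (eps : E) : nat := enum_rank eps.

Lemma rk_inj eps eps' : rk eps = rk eps' -> eps = eps'.
Proof. by move/val_inj/enum_rank_inj. Qed.

Lemma rk_lt eps : eps != e0 -> rk eps < m.-1.
Proof.
move=> h; have h1 : rk eps < m := ltn_ord (enum_rank eps).
have : rk eps != m.-1.
  by rewrite -he0; apply: contra h => /eqP /val_inj /enum_rank_inj ->.
lia.
Qed.

Variables (a b : nat) (fA : {ffun 'I_k -> 'I_a}) (fB : {ffun 'I_k.+1 -> 'I_b}).
Hypotheses (hA : dominated_col (path_rel k) fA) (hB : dominated_col (path_rel k.+1) fB).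

Definition col (x : T) : nat :=
  if blk x == e0 then m.-1 * a + fB (inord (posF x))
  else rk (blk x) * a + fA (inord (posF x - sh (blk x))).

Lemma mix_lt q i c : q < c -> i < a -> q * a + i < c * a.
Proof.
move=> h1 h2; apply: (@leq_trans (q.+1 * a)); last by rewrite leq_mul2r h1 orbT.
by rewrite mulSn addnC ltn_add2r.
Qed.

Lemma mix_div q i : i < a -> (q * a + i) %/ a = q.
Proof. move=> h; rewrite divnMDl ?divn_small ?addn0 //; lia. Qed.

Lemma mix_mod q i : i < a -> (q * a + i) %% a = i.
Proof. by move=> h; rewrite modnMDl modn_small. Qed.

Lemma proper_fA (p q : 'I_k) : path_rel k p q -> (fA p : nat) != fA q.
Proof.
case/andP: hA => /forallP hpr _ hpq.
have := implyP (forallP (hpr p) q) hpq.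
by apply: contra => /eqP /val_inj ->.
Qed.

Lemma proper_fB (p q : 'I_k.+1) : path_rel k.+1 p q -> (fB p : nat) != fB q.
Proof.
case/andP: hB => /forallP hpr _ hpq.
have := implyP (forallP (hpr p) q) hpq.
by apply: contra => /eqP /val_inj ->.
Qed.

Lemma dom_fA (c : 'I_a) : exists z : 'I_k, forall y, fA y = c -> path_rel k z y.
Proof.
case/andP: hA => _ /forallP /(_ c) /existsP [z /forallP hz].
by exists z => y hy; apply: (implyP (hz y)); rewrite hy.
Qed.

Lemma dom_fB (c : 'I_b) : exists z : 'I_k.+1, forall y, fB y = c -> path_rel k.+1 z y.
Proof.
case/andP: hB => _ /forallP /(_ c) /existsP [z /forallP hz].
by exists z => y hy; apply: (implyP (hz y)); rewrite hy.
Qed.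

Lemma col_lt x : col x < m.-1 * a + b.
Proof.
rewrite /col; case: ifP => h; first by rewrite ltn_add2l ltn_ord.
apply: leq_trans (leq_addr _ _); apply: mix_lt; last exact: ltn_ord.
by apply: rk_lt; rewrite h.
Qed.

Lemma col_proper x y : r x y -> col x != col y.
Proof.
move=> hr; have fx := fullp_pos x; have fy := fullp_pos y.
have px := posF_le x; have py := posF_le y.
rewrite /col.
case: (eqVneq (blk x) (blk y)) => hb.
  have hadj : ((posF x).+1 == posF y) || ((posF y).+1 == posF x).
    by apply: (@fullp_rel (blk x)) => //; rewrite {1}fx hb fy.
  clear hr fx fy.
  rewrite -hb; case: ifP => he.
    rewrite eqn_add2l; apply: proper_fB.
    have ix : (inord (posF x) : 'I_k.+1) = posF x :> nat by rewrite inordK // ltnS.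
    have iy : (inord (posF y) : 'I_k.+1) = posF y :> nat by rewrite inordK // ltnS.
    by rewrite /path_rel ix iy.
  have r1 := pos_range (negbT he).
  have r2 : blk y != e0 by rewrite -hb (negbT he).
  have {r2}r2 := pos_range r2; rewrite -hb in r2.
  by rewrite eqn_add2l; apply: proper_fA; apply: adjA.
case: ifP => hx; case: ifP => hy.
- by move: hb; rewrite (eqP hx) (eqP hy) eqxx.
- rewrite neq_ltn; apply/orP; right; apply: leq_trans (leq_addr _ _).
  apply: mix_lt; last exact: ltn_ord.
  by apply: rk_lt; rewrite hy.
- rewrite neq_ltn; apply/orP; left; apply: leq_trans (leq_addr _ _).
  apply: mix_lt; last exact: ltn_ord.
  by apply: rk_lt; rewrite hx.
- apply/negP => /eqP h; have := congr1 (divn^~ a) h.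
  rewrite !mix_div ?ltn_ord // => /rk_inj hb'.
  by rewrite hb' eqxx in hb.
Qed.

Lemma col_dom c : c < m.-1 * a + b -> exists X, forall y, col y = c -> r X y.
Proof.
move=> hc; case: (leqP (m.-1 * a) c) => hca.
  have hi : c - m.-1 * a < b by rewrite ltn_subLR.
  have [z hz] := dom_fB (Ordinal hi).
  exists (fullp e0 z) => y hy.
  have hbe : blk y == e0.
    apply/negPn/negP => hne; move: hy; rewrite /col (negbTE hne) => hy.
    have := mix_lt (rk_lt hne) (ltn_ord (fA (inord (posF y - sh (blk y))))).
    by rewrite hy ltnNge hca.
  move: hy; rewrite /col hbe => hy.
  have hp : path_rel k.+1 z (inord (posF y)).
    by apply: hz; apply: val_inj => /=; rewrite -hy addKn.
  have py := posF_le y.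
  rewrite -(fullp_pos y) (eqP hbe); apply: fullp_adj2 => //.
    by rewrite -ltnS ltn_ord.
  by move: hp; rewrite /path_rel inordK.
have a0 : 0 < a by rewrite lt0n; apply/eqP => a0; rewrite a0 muln0 in hca.
have hq : c %/ a < m.-1 by rewrite ltn_divLR.
have hqm : c %/ a < m by apply: leq_trans hq (leq_pred _).
pose eps := enum_val (Ordinal hqm).
have rke : rk eps = c %/ a by rewrite /rk /eps enum_valK.
have hne : eps != e0.
  by apply/eqP => h; move: rke; rewrite h /rk he0 => ee; rewrite -ee ltnn in hq.
have [z hz] := dom_fA (Ordinal (ltn_pmod c a0)).
exists (fullp eps (z + sh eps)) => y hy.
have hbe : blk y != e0.
  by apply/negP => he; move: hy hca; rewrite /col he => <-; rewrite ltnNge leq_addr.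
move: hy; rewrite /col (negbTE hbe) => hy.
have hbq : blk y = eps by apply: rk_inj; rewrite rke -hy mix_div.
have hfi : fA (inord (posF y - sh (blk y))) = Ordinal (ltn_pmod c a0).
  by apply: val_inj => /=; rewrite -hy mix_mod.
have hp := hz _ hfi.
have hr := pos_range hbe.
have py := posF_le y.
rewrite -(fullp_pos y) hbq; rewrite hbq in hr hp.
apply: fullp_adj2 => //; first exact: zsh.
exact: adjB.
Qed.

Lemma upper : has_dom_col r (m.-1 * a + b).
Proof. exact: (build col_lt col_proper col_dom). Qed.

End Main.

Unset Implicit Arguments.

Theorem theorem4p2 (V : finType) (e : rel V)
  (e_sym : symmetric e) (e_irr : irreflexive e)
  (e_conn : forall x y : V, connect e x y)
  (m_pos : 0 < nedges e)
  (k : nat) (hk : 2 <= k) :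
  chi_dom (path_rel k.+1) <= chi_dom (subdiv_rel e k)
  <= (nedges e).-1 * chi_dom (path_rel k) + chi_dom (path_rel k.+1).
Proof.
case: k hk => [|[|n]] // _.
have hm : nedges e = #|{: edge_t e}| by rewrite /nedges card_sig.
have hm1 : (nedges e).-1 < #|{: edge_t e}| by rewrite -hm; case: (nedges e) m_pos.
pose e0 := enum_val (Ordinal hm1).
have he0 : (enum_rank e0 : nat) = #|{: edge_t e}|.-1 by rewrite /e0 enum_valK /= hm.
apply/andP; split.
  case: (chi_cases (subdiv_rel e n.+2)) => h.
    by apply: chi_le; apply: (lower e_irr e0).
  rewrite h; apply: leq_trans (chi_ub _) _; rewrite card_ord ltnS.
  rewrite card_sum card_prod card_ord.
  have hV : 2 <= #|V|.
    have := subset_leq_card (subsetT [set (val e0).1; (val e0).2]).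
    by rewrite cards2 (edge_neq e_irr) cardsT.
  have hE : 0 < #|{: edge_t e}| by rewrite -hm.
  rewrite -[n.+3]/(2 + n.+1); apply: leq_add hV (leq_pmull _ hE).
have /existsP [fA hfA] := path_spec n.
have /existsP [fB hfB] := path_spec n.+1.
apply: chi_le; rewrite hm; exact: (upper e_sym e_irr e_conn he0 hfA hfB).
Qed.
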